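(* Let $(A,\cdot,\alpha)$ be a nearly Hom-associative algebra over a field $\mathbb{K}$ of characteristic $0$, let $V$ be a finite-dimensional linear space over $\mathbb{K}$, and let $l,r:A\to\mathrm{End}(V)$ be linear maps and $\varphi\in\mathrm{End}(V)$ such that $(l,r,V,\varphi)$ is a bimodule of $(A,\cdot,\alpha)$. Then the linear map $l-r:A\to\mathrm{End}(V)$, $x\mapsto l(x)-r(x)$, is a representation of the underlying Hom-Lie algebra $(A,[\cdot,\cdot],\alpha)$, $[x,y]=x\cdot y-y\cdot x$, on $V$ with respect to $\varphi$; i.e. for all $x,y\in A$: $(l-r)(\alpha(x))\circ\varphi=\varphi\circ(l-r)(x)$ and $(l-r)([x,y])\circ\varphi=(l-r)(\alpha(x))\circ(l-r)(y)-(l-r)(\alpha(y))\circ(l-r)(x)$.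
   Context: A nearly Hom-associative algebra is a triple $(A,\cdot,\alpha)$ with bilinear product $\cdot$ and linear $\alpha:A\to A$ such that $\alpha(x)\cdot(y\cdot z)=(z\cdot x)\cdot\alpha(y)$ for all $x,y,z$; its commutator bracket gives a Hom-Lie algebra $(A,[\cdot,\cdot],\alpha)$. A bimodule of $(A,\cdot,\alpha)$ is a quadruple $(l,r,V,\varphi)$ with $V$ a linear space, $l,r:A\to\mathrm{End}(V)$ linear and $\varphi\in\mathrm{End}(V)$ such that for all $x,y\in A$: $\varphi\circ l(x)=l(\alpha(x))\circ\varphi$, $\varphi\circ r(x)=r(\alpha(x))\circ\varphi$, $l(\alpha(x))\circ l(y)=r(\alpha(y))\circ r(x)$, $l(\alpha(x))\circ r(y)=l(y\cdot x)\circ\varphi$, $r(\alpha(x))\circ l(y)=r(x\cdot y)\circ\varphi$. A representation of a Hom-Lie algebra $(\mathcal G,[\cdot,\cdot],\alpha)$ on $V$ with respect to $\psi\in\mathrm{End}(V)$ is a linear map $\rho:\mathcal G\to\mathrm{End}(V)$ with $\rho(\alpha(x))\circ\psi=\psi\circ\rho(x)$ and $\rho([x,y])\circ\psi=\rho(\alpha(x))\circ\rho(y)-\rho(\alpha(y))\circ\rho(x)$. *)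

(* Defs.v *)
From HB Require Import structures.
From mathcomp Require Import all_boot all_order all_algebra.
From mathcomp Require Import sesquilinear.
Set Implicit Arguments. Unset Strict Implicit. Unset Printing Implicit Defensive.
Import GRing.Theory.
Local Open Scope ring_scope.

Definition nearly_hom_assoc (K : fieldType) (A : lmodType K)
  (mul : A -> A -> A) (alpha : A -> A) : Prop :=
  forall x y z : A, mul (alpha x) (mul y z) = mul (mul z x) (alpha y).

Definition is_bimodule (K : fieldType) (A : lmodType K) (V : vectType K)
  (mul : A -> A -> A) (alpha : A -> A)
  (l r : A -> 'End(V)) (phi : 'End(V)) : Prop :=
  forall x y : A,
  [/\ (phi \o l x)%VF = (l (alpha x) \o phi)%VF,
      (phi \o r x)%VF = (r (alpha x) \o phi)%VF,
      (l (alpha x) \o l y)%VF = (r (alpha y) \o r x)%VF,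
      (l (alpha x) \o r y)%VF = (l (mul y x) \o phi)%VF &
      (r (alpha x) \o l y)%VF = (r (mul x y) \o phi)%VF].

Definition commutator (K : fieldType) (A : lmodType K) (mul : A -> A -> A)
  (x y : A) : A := mul x y - mul y x.

Definition is_homlie_rep (K : fieldType) (G : lmodType K) (V : vectType K)
  (br : G -> G -> G) (alpha : G -> G)
  (rho : G -> 'End(V)) (psi : 'End(V)) : Prop :=
  forall x y : G,
    (rho (alpha x) \o psi)%VF = (psi \o rho x)%VF /\
    (rho (br x y) \o psi)%VF =
      (rho (alpha x) \o rho y)%VF - (rho (alpha y) \o rho x)%VF.

(* Main.v *)
Require Import Defs.
From HB Require Import structures.
From mathcomp Require Import all_boot all_order all_algebra.
From mathcomp Require Import sesquilinear.
Import GRing.Theory.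
Local Open Scope ring_scope.

Theorem mainTheorem12 (K : fieldType) (charK0 : [pchar K] =i pred0)
  (A : lmodType K) (mul : {bilinear A -> A -> A}) (alpha : {linear A -> A})
  (V : vectType K) (l r : {linear A -> 'End(V)}) (phi : 'End(V)) :
  nearly_hom_assoc mul alpha ->
  is_bimodule mul alpha l r phi ->
  is_homlie_rep (commutator mul) alpha (fun x => l x - r x) phi.
Proof.
move=> _ Hb x y; split.
  have [H1 H2 _ _ _] := Hb x x.
  by rewrite comp_lfunDl comp_lfunDr comp_lfunNl comp_lfunNr H1 H2.
have [_ _ H3x _ _] := Hb x y.
have [_ _ H3y _ _] := Hb y x.
have [_ _ _ H4x H5x] := Hb x y.
have [_ _ _ H4y H5y] := Hb y x.
rewrite /commutator !linearB /=.
rewrite !(comp_lfunDl, comp_lfunDr, comp_lfunNl, comp_lfunNr).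
rewrite -H4x -H4y -H5x -H5y H3x H3y.
rewrite !opprD !opprK !addrA.
set a := (r (alpha x) \o r y)%VF.
set b := (r (alpha y) \o r x)%VF.
set c := (l (alpha y) \o r x)%VF.
set d := (l (alpha x) \o r y)%VF.
set e := (r (alpha x) \o l y)%VF.
set f := (r (alpha y) \o l x)%VF.
rewrite addrK [RHS]addrC !addrA addNr add0r; congr (_ + _); rewrite [RHS]addrC !addrA.
by [].
Qed.
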